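(* Let $k\ge 1$ and let $G$ be an $\mathcal{O}_k$-free graph of minimum degree at least 2. If $x$ is a vertex of degree $d$ in $G$, then $r(G)-r(G-x)\ge \frac{d-k+1}{2}$.
   Context: All graphs are finite and simple. The cycle rank of a graph $G$ is $r(G)=|E(G)|-|V(G)|+|\mathcal{C}(G)|$, where $\mathcal{C}(G)$ is the set of connected components of $G$. Two vertex-disjoint subgraphs are independent if there is no edge between them. A graph $G$ is $\mathcal{O}_k$-free if it does not contain $k$ pairwise vertex-disjoint and pairwise independent cycles; equivalently, $G$ has no induced subgraph isomorphic to a disjoint union of $k$ cycles. *)

(* Defs.v *)
From mathcomp Require Import all_boot all_order all_algebra.
Set Implicit Arguments. Unset Strict Implicit. Unset Printing Implicit Defensive.
Import GRing.Theory Num.Theory.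

Definition simple_graph (T : finType) (e : rel T) : Prop :=
  symmetric e /\ irreflexive e.

Definition induced_rel (T : finType) (e : rel T) (S : {set T}) : rel T :=
  fun u v => [&& u \in S, v \in S & e u v].

Definition n_edges (T : finType) (e : rel T) (S : {set T}) : nat :=
  #|[set A : {set T} | (A \subset S) &&
      [exists u, exists v, (A == [set u; v]) && e u v]]|.

Definition n_components (T : finType) (e : rel T) (S : {set T}) : nat :=
  n_comp (induced_rel e S) (mem S).

Definition cycle_rank (T : finType) (e : rel T) (S : {set T}) : int :=
  (n_edges e S)%:Z - (#|S|)%:Z + (n_components e S)%:Z.

Definition degree (T : finType) (e : rel T) (x : T) : nat := #|[set y | e x y]|.

Definition is_cycle (T : finType) (e : rel T) (c : seq T) : Prop :=
  [/\ 3 <= size c, uniq c & cycle e c].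

Definition has_Ok (T : finType) (e : rel T) (k : nat) : Prop :=
  exists c : 'I_k -> seq T,
    (forall i, is_cycle e (c i)) /\
    (forall i j, i != j -> forall u v, u \in c i -> v \in c j ->
        u != v /\ ~~ e u v).

Definition Ok_free (T : finType) (e : rel T) (k : nat) : Prop := ~ has_Ok e k.

(* Main.v *)
Require Import Defs.
From mathcomp Require Import all_boot all_order all_algebra.
From Stdlib Require Import Classical.
From mathcomp Require Import zify lra.
Set Implicit Arguments. Unset Strict Implicit. Unset Printing Implicit Defensive.

Section Cyc.
Variables (T : finType) (e : rel T).
Hypothesis esym : symmetric e.
Hypothesis eirr : irreflexive e.
Variables (C : {set T}) (w : T).

Definition good (p : seq T) :=
  if p is v :: q then [&& uniq p, all (mem C) p & path e v q] else false.
Definition maxp (p : seq T) := forall p', good p' -> (size p' <= size p)%N.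

Lemma good_size p : good p -> (size p <= #|T|)%N.
Proof.
case: p => // v q /and3P[u _ _].
by rewrite -(card_uniqP u) max_card.
Qed.

Lemma exists_max : w \in C -> exists p, good p /\ maxp p.
Proof.
move=> wC.
have H : forall n p, good p -> (#|T| - size p <= n)%N -> exists pm, good pm /\ maxp pm.
  elim=> [|n IH] p gp hn.
    exists p; split => // p' gp'.
    by apply: leq_trans (good_size gp') _; rewrite -subn_eq0 -leqn0.
  case: (classic (maxp p)) => [mp|nmp]; first by exists p.
  have [p' hp'] := not_all_ex_not _ _ nmp.
  have [gp' ns] := imply_to_and _ _ hp'.
  apply: (IH p') => //.
  have lt : (size p < size p')%N by rewrite ltnNge; apply/negP.
  move: (good_size gp') hn lt; clear; lia.
apply: (H #|T| [:: w]); first by rewrite /= wC.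
by rewrite leq_subr.
Qed.

Lemma ext_in v q a : good (v :: q) -> maxp (v :: q) -> e v a -> a \in C ->
  a \in v :: q.
Proof.
move=> g m eva aC; apply/negPn/negP => na.
have g' : good [:: a, v & q].
  move: g => /= /and3P[u al pa].
  by rewrite /= aC esym eva pa andbT /=; move: na u al => /= -> -> ->.
by have := m _ g'; rewrite /= ltnn.
Qed.

Lemma from_max v q : good (v :: q) -> maxp (v :: q) ->
  (exists u1 u2, [/\ u1 != u2, e v u1, e v u2, u1 \in C & u2 \in C]) ->
  exists c, is_cycle e c /\ {subset c <= C}.
Proof.
move=> g m [u1 [u2 [n12 e1 e2 c1 c2]]].
have inq u : e v u -> u \in C -> u \in q.
  move=> evu uC; have := ext_in g m evu uC.
  by rewrite inE; case: eqP => [eu|//]; rewrite eu eirr in evu.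
have [u [uq uh evu]] : exists u, [/\ u \in q, u != head u q & e v u].
  case: q g m inq => [|a q'] g m inq; first by have := inq _ e1 c1.
  case: (eqVneq u1 a) => [ea|na]; last by exists u1; rewrite inq.
  by exists u2; rewrite inq //= -ea eq_sym.
case/splitPr: uq g uh => q1 q2 g uh.
have q1n : q1 != [::] by case: q1 g uh => //=; rewrite eqxx.
move: g; rewrite /good => /and3P[un al pa].
have eq1 : v :: q1 ++ u :: q2 = (v :: rcons q1 u) ++ q2 by rewrite -cat_rcons.
exists (v :: rcons q1 u); split; last first.
  move=> z zc; have /allP := al; apply.
  by rewrite eq1 mem_cat zc.
split.
- by rewrite /= size_rcons; case: (q1) q1n.
- by move: un; rewrite eq1 cat_uniq => /andP[].
- rewrite /= rcons_path last_rcons.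
  move: pa; rewrite -cat_rcons cat_path => /andP[-> _] /=.
  by rewrite esym.
Qed.

Lemma cycle_in : w \in C ->
  (forall v, v \in C -> v != w ->
     exists u1 u2, [/\ u1 != u2, e v u1, e v u2, u1 \in C & u2 \in C]) ->
  (exists u, e w u && (u \in C)) ->
  exists c, is_cycle e c /\ {subset c <= C}.
Proof.
move=> wC deg [a /andP[ewa aC]].
have [[|v q] [g m]] := exists_max wC; first by [].
have vC : v \in C by move: g => /and3P[_ /allP al _]; apply: al; rewrite mem_head.
case: (eqVneq v w) => [vw|vnw]; last by apply: (from_max g m); apply: deg.
subst v.
case: q g m => [|b q] g m.
  have g' : good [:: a; w].
    rewrite /= aC wC esym ewa !andbT inE; apply/eqP => aw.
    by rewrite aw eirr in ewa.
  by have := m _ g'.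
set z := last b q.
have E : rev [:: w, b & q] = z :: rev (belast w (b :: q)).
  by rewrite [w :: b :: q]lastI rev_rcons.
have gz : good (z :: rev (belast w (b :: q))).
  move: (g); rewrite /good -E rev_uniq all_rev => /and3P[-> -> pa] /=.
  have pa' : path (fun s t => e t s) w (b :: q).
    by rewrite (eq_path (e' := e)) // => s t; apply: esym.
  by move: pa'; rewrite -rev_path.
have mz : maxp (z :: rev (belast w (b :: q))).
  by move=> p' /m; rewrite -E size_rev.
have zn : z != w.
  move: g => /and3P[/= /andP[wn _] _ _]; apply/eqP => zw.
  by move: wn; rewrite -zw /z mem_last.
have zC : z \in C.
  by move: (gz) => /and3P[_ /allP al _]; apply: al; rewrite mem_head.
by apply: (from_max gz mz); apply: deg.
Qed.
End Cyc.

Section Main.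
Variables (T : finType) (e : rel T) (x : T).
Hypothesis esym : symmetric e.
Hypothesis eirr : irreflexive e.

Let S : {set T} := ~: [set x].
Let N : {set T} := [set y | e x y].

Lemma edges_split : n_edges e [set: T] = (n_edges e S + #|N|)%N.
Proof.
rewrite /n_edges.
set ET := [set B : {set T} | _ & _].
set ES := [set B : {set T} | _ & _].
have E1 : ET :\: [set B : {set T} | x \in B] = ES.
  apply/setP => B; rewrite !inE subsetT /= /S subsetC sub1set !inE.
  by case: (x \in B).
have E2 : ET :&: [set B : {set T} | x \in B] = (fun y => [set x; y]) @: N.
  apply/setP => B; rewrite !inE subsetT /=; apply/idP/idP.
  - case/andP => /existsP[u /existsP[v /andP[/eqP -> euv]]].
    rewrite in_set2 => /orP[] /eqP xe.
      by apply/imsetP; exists v; rewrite /N ?inE; rewrite xe.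
    by apply/imsetP; exists u; [rewrite /N inE xe esym | rewrite xe setUC].
  - case/imsetP => y; rewrite /N inE => exy ->.
    by rewrite !inE eqxx andbT; apply/existsP; exists x; apply/existsP; exists y; rewrite eqxx.
rewrite -(cardsID [set B : {set T} | x \in B] ET) E1 E2 card_in_imset; first by rewrite addnC.
move=> y1 y2; rewrite /N !inE => e1 e2 eq.
have : y1 \in [set x; y2] by rewrite -eq !inE eqxx orbT.
rewrite in_set2 => /orP[] /eqP // y1x.
by rewrite y1x eirr in e1.
Qed.


Let eS := induced_rel e S.
Let eT := induced_rel e [set: T].
Let M : {set T} := [set fingraph.root eS y | y in N].

Lemma eS_sym : connect_sym eS.
Proof.
apply: sym_connect_sym => u v; rewrite /eS /induced_rel esym.
by case: (u \in S); case: (v \in S).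
Qed.

Lemma eT_sym : connect_sym eT.
Proof.
apply: sym_connect_sym => u v; rewrite /eT /induced_rel esym.
by case: (u \in _); case: (v \in _).
Qed.

Lemma eTe : connect eT =2 connect e.
Proof. by apply: eq_connect => u v; rewrite /eT /induced_rel !inE. Qed.

Lemma S_closed u v : connect eS u v -> u \in S -> v \in S.
Proof.
move/connectP => [p pp ->]; elim: p u pp => //= a p IH u /andP[/and3P[_ aS _] pp] _.
exact: IH pp aS.
Qed.

Lemma path_split u v : u \in S -> connect e u v ->
  connect eS u v \/ exists2 y, e x y & connect eS u y.
Proof.
move=> uS /connectP [p pp ->]; elim: p u uS pp => [|a p IH] u uS /=.
  by left; apply: connect0.
case/andP => eua pp.
case: (eqVneq a x) => [ax|anx].
  by right; exists u; [rewrite -ax esym | apply: connect0].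
have aS : a \in S by rewrite /S !inE.
have eSua : eS u a by rewrite /eS /induced_rel uS aS eua.
case: (IH a aS pp) => [h|[y h1 h2]].
  by left; apply: connect_trans (connect1 eSua) h.
by right; exists y => //; apply: connect_trans (connect1 eSua) h2.
Qed.

Lemma xS : x \notin S.
Proof. by rewrite /S !inE eqxx. Qed.

Lemma comps_bound :
  (n_components e S + 1 <= n_components e [set: T] + #|M|)%N.
Proof.
set R' := [set r | roots eS r && (r \in S)].
set RT := [set r | roots eT r].
have cS : n_components e S = #|R'|.
  by rewrite /n_components /n_comp_mem; apply: eq_card => r; rewrite !inE.
have cT : n_components e [set: T] = #|RT|.
  by rewrite /n_components /n_comp_mem; apply: eq_card => r; rewrite !inE andbT.
have MR : M \subset R'.
  apply/subsetP => r /imsetP[y]; rewrite /N inE => exy ->.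
  have yS : y \in S by rewrite /S !inE; apply/eqP => yx; rewrite yx eirr in exy.
  rewrite inE (roots_root eS_sym) /=.
  exact: S_closed (connect_root _ _) yS.
have rxT : fingraph.root eT x \in RT by rewrite inE (roots_root eT_sym).
have key r : r \in R' :\: M -> forall v, connect e r v -> connect eS r v.
  rewrite !inE => /andP[rM /andP[rr rS]] v crv.
  have rS' : r \in S by rewrite /S !inE.
  case: (path_split rS' crv) => // [[y exy cry]].
  exfalso; move/negP: rM; apply; apply/imsetP; exists y; first by rewrite /N inE.
  by rewrite -(eqP rr); apply/(fingraph.rootP eS_sym).
have inj : {in R' :\: M &, injective (fingraph.root eT)}.
  move=> r1 r2 h1 h2 /(fingraph.rootP eT_sym); rewrite eTe => /(key _ h1) c12.
  move: h1 h2; rewrite !inE => /and3P[_ /eqP <- _] /and3P[_ /eqP <- _].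
  exact/(fingraph.rootP eS_sym).
have sub : fingraph.root eT @: (R' :\: M) \subset RT :\ fingraph.root eT x.
  apply/subsetP => z /imsetP[r h ->]; rewrite !inE (roots_root eT_sym) andbT.
  apply/negP => /eqP /(fingraph.rootP eT_sym); rewrite eTe => /(key _ h) crx.
  move: h; rewrite !inE => /and3P[_ _ rx]; have rS : r \in S by rewrite /S !inE.
  by move: (S_closed crx rS); rewrite (negbTE xS).
have := subset_leq_card sub; rewrite card_in_imset // => le.
have := cardsD1 (fingraph.root eT x) RT; rewrite rxT => eT1.
have := cardsID M R'; rewrite (setIidPr MR) => eR.
rewrite cS cT; lia.
Qed.

Let Nr (r : T) : {set T} := [set y in N | fingraph.root eS y == r].
Let A : {set T} := [set r in M | #|Nr r| == 1%N].

Lemma count_bound : (2 * #|M| <= #|N| + #|A|)%N.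
Proof.
have eN : #|N| = \sum_(r in M) #|Nr r|.
  rewrite -sum1_card (partition_big (fingraph.root eS) (mem M)) /=; last first.
    by move=> y yN; apply: imset_f.
  apply: eq_bigr => r rM; rewrite -sum1_card; apply: eq_bigl => y.
  by rewrite /Nr !inE.
have eA : #|A| = \sum_(r in M) (#|Nr r| == 1%N).
  rewrite -sum1_card (eq_bigl (fun r => (r \in M) && (#|Nr r| == 1%N))); last first.
    by move=> r; rewrite /A !inE.
  rewrite big_mkcondr /=; apply: eq_bigr => r _.
  by case: (#|Nr r| == 1%N).
rewrite eN eA -big_split /= mulnC -sum_nat_const; apply: leq_sum => r rM.
have : (0 < #|Nr r|)%N.
  move: rM => /imsetP[y yN ->]; apply/card_gt0P; exists y.
  by rewrite /Nr inE yN eqxx.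
by case: #|Nr r| => [|[|n]].
Qed.

Let C (r : T) : {set T} := [set v | (v \in S) && (fingraph.root eS v == r)].

Lemma nbr_in r v u : v \in C r -> e v u -> u \in S -> u \in C r.
Proof.
move=> vC evu uS; move: vC; rewrite /C !inE => /andP[vx /eqP <-].
have vS : v \in S by rewrite /S !inE.
apply/andP; split; first by move: uS; rewrite /S !inE.
have h : eS v u by rewrite /eS /induced_rel vS uS evu.
by apply/eqP; symmetry; apply/(fingraph.rootP eS_sym)/connect1.
Qed.

Lemma cycle_comp r : r \in A -> (forall v, (2 <= degree e v)%N) ->
  exists c, is_cycle e c /\ {subset c <= C r}.
Proof.
move=> rA deg.
have /cards1P [w Nw] : #|Nr r| == 1%N by move: rA; rewrite /A inE => /andP[].
have wN : w \in Nr r by rewrite Nw set11.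
move: (wN); rewrite /Nr inE => /andP[]; rewrite /N inE => exw /eqP rw.
have wS : w \in S by rewrite /S !inE; apply/eqP => wx; rewrite wx eirr in exw.
have nb2 v : exists u1 u2, [/\ u1 != u2, e v u1 & e v u2].
  have /card_gt1P [u1 [u2 [h1 h2 h12]]] := deg v.
  by exists u1, u2; move: h1 h2; rewrite !inE.
apply: (cycle_in esym eirr (w := w)).
- by rewrite /C inE wS rw eqxx.
- move=> v vC vw; have [u1 [u2 [n12 e1 e2]]] := nb2 v.
  have nx u : e v u -> u \in S.
    move=> evu; rewrite /S !inE; apply/eqP => ux.
    have : v \in Nr r.
      move: vC; rewrite /C inE => /andP[_ rv].
      by rewrite /Nr !inE -ux esym evu rv.
    by rewrite Nw inE (negbTE vw).
  by exists u1, u2; split => //; apply: (nbr_in vC) => //; apply: nx.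
- have [u1 [u2 [n12 e1 e2]]] := nb2 w.
  have wC : w \in C r by rewrite /C inE wS rw eqxx.
  case: (eqVneq u1 x) => [u1x|u1x].
    have u2S : u2 \in S by rewrite /S !inE -u1x eq_sym.
    by exists u2; rewrite e2 (nbr_in wC e2 u2S).
  have u1S : u1 \in S by rewrite /S !inE.
  by exists u1; rewrite e1 (nbr_in wC e1 u1S).
Qed.

Lemma A_small k : Ok_free e k -> (forall v, (2 <= degree e v)%N) -> (#|A| < k)%N.
Proof.
move=> okf deg; rewrite ltnNge; apply/negP => kA; apply: okf.
set s := enum A.
have ss : size s = #|A| by rewrite cardE.
have ri (i : 'I_k) : nth x s i \in A.
  by rewrite -mem_enum mem_nth // ss (leq_trans (ltn_ord i) kA).
have hc (i : 'I_k) : exists c, is_cycle e c /\ {subset c <= C (nth x s i)}.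
  exact: cycle_comp (ri i) deg.
have [f hf] := fin_all_exists hc.
exists f; split => [i|i j ij u v ui vj]; first by case: (hf i).
have uC := (proj2 (hf i)) u ui.
have vC := (proj2 (hf j)) v vj.
have nij : nth x s i != nth x s j.
  rewrite nth_uniq ?enum_uniq // ss (leq_trans (ltn_ord _) kA) //.
move: uC vC; rewrite /C !inE => /andP[ux /eqP ru] /andP[vx /eqP rv].
have uS : u \in S by rewrite /S !inE.
have vS : v \in S by rewrite /S !inE.
split.
  by apply/eqP => uv; move: nij; rewrite -ru -rv uv eqxx.
apply/negP => euv.
have h : eS u v by rewrite /eS /induced_rel uS vS euv.
move: nij; rewrite -ru -rv.
by rewrite (elimT (fingraph.rootP eS_sym) (connect1 h)) eqxx.
Qed.

End Main.

Import GRing.Theory Num.Theory.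
Local Open Scope ring_scope.

Theorem mainTheorem13 (T : finType) (e : rel T) (k : nat) (x : T) :
  simple_graph e -> (1 <= k)%N -> Ok_free e k ->
  (forall v : T, (2 <= degree e v)%N) ->
  (((degree e x)%:Z - k%:Z + 1)%:~R / 2 : rat)
    <= (cycle_rank e [set: T] - cycle_rank e (~: [set x]))%:~R.
Proof.
move=> [es ei] k1 okf deg.
have h1 := @edges_split T e x es ei.
have h2 := @comps_bound T e x es ei.
have h3 := @count_bound T e x.
have h4 := @A_small T e x es ei k okf deg.
have h5 : (#|[set: T]| = #|~: [set x]| + 1)%N.
  by rewrite cardsT -(cardsC [set x]) cards1 addnC.
have key : ((degree e x)%:Z - k%:Z + 1) <=
   (cycle_rank e [set: T] - cycle_rank e (~: [set x])) +
   (cycle_rank e [set: T] - cycle_rank e (~: [set x])).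
  rewrite /cycle_rank /degree h1 h5.
  move: h2 h3 h4; lia.
have := key; rewrite -(ler_int rat) !intrD => key'.
lra.
Qed.
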